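(* Let $\mathcal{C}$ be a regular category with terminal object $\mathbf{1}$, let $X$ be an object, and let $R$ be a subobject of $X \times X$ which is very weakly point surjective: for every subobject $P$ of $X$ there is an arrow $c : \mathbf{1} \to X$ with $\langle c, c\rangle^*(R) = c^*(P)$ in $\mathsf{Sub}(\mathbf{1})$. Then every natural transformation $\tau : \mathsf{Sub} \Rightarrow \mathsf{Sub}$ has a fixpoint, i.e. there is $s \in \mathsf{Sub}(\mathbf{1})$ with $\tau_{\mathbf{1}}(s) = s$.
   Context: A regular category is a well-powered category with finite limits and images, with images stable under pullback. For an object $A$, $\mathsf{Sub}(A)$ is the poset of subobjects of $A$ (equivalence classes of monomorphisms into $A$, where $m_1 \lesssim m_2$ if $m_1$ factors through $m_2$). For $f : A \to B$, $f^* : \mathsf{Sub}(B) \to \mathsf{Sub}(A)$ is pullback along $f$; this gives a functor $\mathsf{Sub} : \mathcal{C}^{op} \to \mathbf{Set}$. A natural transformation $\tau : \mathsf{Sub} \Rightarrow \mathsf{Sub}$ is a family of functions $\tau_A : \mathsf{Sub}(A) \to \mathsf{Sub}(A)$ with $f^* \circ \tau_B = \tau_A \circ f^*$ for every $f : A \to B$. $\langle c, c\rangle : \mathbf{1} \to X \times X$ is the pairing. *)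

(* Defs.v *)
Set Implicit Arguments.
Unset Strict Implicit.

Record Category := {
  Ob :> Type;
  Hom : Ob -> Ob -> Type;
  idm : forall A, Hom A A;
  comp : forall A B C, Hom B C -> Hom A B -> Hom A C;
  comp_assoc : forall A B C D (h : Hom C D) (g : Hom B C) (f : Hom A B),
      comp h (comp g f) = comp (comp h g) f;
  comp_id_l : forall A B (f : Hom A B), comp (idm B) f = f;
  comp_id_r : forall A B (f : Hom A B), comp f (idm A) = f
}.

Arguments Hom {C} : rename.
Arguments idm {C} A : rename.
Arguments comp {C A B C0} _ _ : rename.

Section Defs.
Variable C : Category.

Definition mono {A B : C} (m : Hom A B) : Prop :=
  forall Z (g h : Hom Z A), comp m g = comp m h -> g = h.

Definition is_terminal (T : C) : Prop :=
  forall A : C, exists f : Hom A T, forall g : Hom A T, g = f.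

Definition is_product {A B P : C} (p1 : Hom P A) (p2 : Hom P B) : Prop :=
  forall Q (q1 : Hom Q A) (q2 : Hom Q B),
    exists u : Hom Q P, comp p1 u = q1 /\ comp p2 u = q2 /\
      forall v : Hom Q P, comp p1 v = q1 -> comp p2 v = q2 -> v = u.

Definition is_pullback {A B D P : C} (f : Hom A D) (g : Hom B D)
    (p1 : Hom P A) (p2 : Hom P B) : Prop :=
  comp f p1 = comp g p2 /\
  forall Q (q1 : Hom Q A) (q2 : Hom Q B), comp f q1 = comp g q2 ->
    exists u : Hom Q P, comp p1 u = q1 /\ comp p2 u = q2 /\
      forall v : Hom Q P, comp p1 v = q1 -> comp p2 v = q2 -> v = u.

(* Representatives of subobjects: monomorphisms into A. *)
Definition SubT (A : C) : Type := { B : C & { m : Hom B A | mono m } }.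
Definition sdom {A : C} (S : SubT A) : C := projT1 S.
Definition sarr {A : C} (S : SubT A) : Hom (sdom S) A := proj1_sig (projT2 S).

Definition sub_le {A : C} (S1 S2 : SubT A) : Prop :=
  exists k : Hom (sdom S1) (sdom S2), comp (sarr S2) k = sarr S1.
Definition sub_eq {A : C} (S1 S2 : SubT A) : Prop := sub_le S1 S2 /\ sub_le S2 S1.

Definition is_pb_sub {A B : C} (f : Hom A B) (S : SubT B) (S' : SubT A) : Prop :=
  exists k : Hom (sdom S') (sdom S), is_pullback f (sarr S) (sarr S') k.

Definition is_image {A B I : C} (f : Hom A B) (m : Hom I B) : Prop :=
  mono m /\ (exists e : Hom A I, comp m e = f) /\
  forall I' (m' : Hom I' B), mono m' -> (exists e' : Hom A I', comp m' e' = f) ->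
    exists k : Hom I I', comp m' k = m.

Record regular : Prop := {
  reg_terminal : exists T : C, is_terminal T;
  reg_products : forall A B : C, exists P (p1 : Hom P A) (p2 : Hom P B), is_product p1 p2;
  reg_pullbacks : forall A B D (f : Hom A D) (g : Hom B D),
      exists P (p1 : Hom P A) (p2 : Hom P B), is_pullback f g p1 p2;
  reg_wellpowered : forall A : C, exists (I : Type) (F : I -> SubT A),
      forall S : SubT A, exists i, sub_eq (F i) S;
  reg_images : forall A B (f : Hom A B), exists I (m : Hom I B), is_image f m;
  reg_images_stable : forall A B B' (f : Hom A B) (g : Hom B' B)
      P (p1 : Hom P A) (p2 : Hom P B') I (m : Hom I B) Q (q1 : Hom Q I) (q2 : Hom Q B'),
      is_pullback f g p1 p2 -> is_image f m -> is_pullback m g q1 q2 -> is_image p2 q2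
}.

Definition nat_trans_Sub (tau : forall A : C, SubT A -> SubT A) : Prop :=
  (forall A (S1 S2 : SubT A), sub_eq S1 S2 -> sub_eq (tau A S1) (tau A S2)) /\
  (forall A B (f : Hom A B) (S : SubT B) (S1 S2 : SubT A),
      is_pb_sub f S S1 -> is_pb_sub f (tau B S) S2 -> sub_eq (tau A S1) S2).

End Defs.

(* Main.v *)
Require Import Defs.

Lemma pb_exists (C : Category) (HC : regular C) (A B : C) (f : Hom A B) (S : SubT B) :
  exists S' : SubT A, is_pb_sub f S S'.
Proof.
  destruct (reg_pullbacks HC f (sarr S)) as [P [p1 [p2 Hpb]]].
  assert (Hm : mono p1).
  { intros Z g h Hgh. destruct Hpb as [Hc Hu].
    assert (E : comp (sarr S) (comp p2 g) = comp (sarr S) (comp p2 h)).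
    { rewrite !comp_assoc, <- Hc, <- !comp_assoc, Hgh. reflexivity. }
    assert (E2 : comp p2 g = comp p2 h) by (apply (proj2_sig (projT2 S)); exact E).
    assert (Hq : comp f (comp p1 g) = comp (sarr S) (comp p2 g))
      by (rewrite !comp_assoc, Hc; reflexivity).
    destruct (Hu Z _ _ Hq) as [u [_ [_ Hun]]].
    rewrite (Hun g eq_refl eq_refl). symmetry. apply Hun; auto. }
  exists (existT _ P (exist _ p1 Hm)). exists p2. exact Hpb.
Qed.

Lemma sub_le_trans (C : Category) (A : C) (S1 S2 S3 : SubT A) :
  sub_le S1 S2 -> sub_le S2 S3 -> sub_le S1 S3.
Proof.
  intros [k1 H1] [k2 H2]. exists (comp k2 k1). rewrite comp_assoc, H2. exact H1.
Qed.

Lemma sub_eq_trans (C : Category) (A : C) (S1 S2 S3 : SubT A) :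
  sub_eq S1 S2 -> sub_eq S2 S3 -> sub_eq S1 S3.
Proof.
  intros [a b] [c d]. split; eapply sub_le_trans; eauto.
Qed.

Theorem lemma5 (C : Category) (HC : regular C) (T : C) (HT : is_terminal T)
  (X XX : C) (pi1 : Hom XX X) (pi2 : Hom XX X) (Hprod : is_product pi1 pi2)
  (R : SubT XX)
  (* very weakly point surjective: for every P there is c : 1 -> X with
     <c,c>^*(R) = c^*(P) in Sub(1) *)
  (HR : forall P : SubT X, exists c : Hom T X,
      forall (cc : Hom T XX), comp pi1 cc = c -> comp pi2 cc = c ->
      forall (S1 S2 : SubT T), is_pb_sub cc R S1 -> is_pb_sub c P S2 -> sub_eq S1 S2)
  (tau : forall A : C, SubT A -> SubT A) (Htau : nat_trans_Sub tau) :
  exists s : SubT T, sub_eq (tau T s) s.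
Proof.
  destruct (Hprod X (idm X) (idm X)) as [d [Hd1 [Hd2 _]]].
  destruct (@pb_exists C HC _ _ d R) as [S0 [k0 [Hc0 Hu0]]].
  destruct (HR (tau X S0)) as [c Hc].
  destruct (@pb_exists C HC _ _ c S0) as [S1' [k1 [Hc1 Hu1]]].
  destruct (@pb_exists C HC _ _ (comp d c) R) as [S1 [k2 [Hc2 Hu2]]].
  destruct (@pb_exists C HC _ _ c (tau X S0)) as [S2 HS2].
  assert (E1 : comp pi1 (comp d c) = c) by (rewrite comp_assoc, Hd1, comp_id_l; reflexivity).
  assert (E2 : comp pi2 (comp d c) = c) by (rewrite comp_assoc, Hd2, comp_id_l; reflexivity).
  assert (H12 : sub_eq S1 S2).
  { eapply Hc; eauto. exists k2. split; assumption. }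
  assert (Hnat : sub_eq (tau T S1') S2).
  { eapply (proj2 Htau); eauto. exists k1. split; assumption. }
  assert (H1'1 : sub_eq S1' S1).
  { split.
    - assert (Q : comp (comp d c) (sarr S1') = comp (sarr R) (comp k0 k1)).
      { rewrite <- comp_assoc, Hc1, !comp_assoc, Hc0. reflexivity. }
      destruct (Hu2 _ _ _ Q) as [u [Hu _]]. exists u. exact Hu.
    - assert (Q : comp d (comp c (sarr S1)) = comp (sarr R) k2).
      { rewrite comp_assoc. exact Hc2. }
      destruct (Hu0 _ _ _ Q) as [u [Hu [_ _]]].
      assert (Q' : comp c (sarr S1) = comp (sarr S0) u) by (symmetry; exact Hu).
      destruct (Hu1 _ _ _ Q') as [v [Hv _]]. exists v. exact Hv. }
  exists S1'.
  eapply sub_eq_trans. exact Hnat.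
  eapply sub_eq_trans. destruct H12 as [a b]. split; [exact b | exact a].
  destruct H1'1 as [a b]. split; [exact b | exact a].
Qed.
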